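(* Let $M$ be a matroid of rank $r$ on a ground set of $n$ elements, and write its Tutte polynomial as $T(M;x,y)=\sum_{i,j} b_{i,j}x^iy^j$. Then $$\sum_{i=0}^{n}\sum_{j=0}^{n-i}(-1)^j\binom{n-i}{j}b_{i,j}=(-1)^{n-r}.$$
   Context: For a matroid $M$ on ground set $E$ with rank function $r$, the Tutte polynomial is $T(M;x,y)=\sum_{A\subseteq E}(x-1)^{r(E)-r(A)}(y-1)^{|A|-r(A)}$; the rank of $M$ is $r(E)$. *)

(* Defs.v *)
From HB Require Import structures.
From mathcomp Require Import all_boot all_order all_algebra.
Set Implicit Arguments. Unset Strict Implicit. Unset Printing Implicit Defensive.
Import Order.TTheory GRing.Theory Num.Theory.
Local Open Scope ring_scope.

Record matroid (E : finType) := Matroid {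
  indep : {set E} -> bool;
  indep0 : indep set0;
  indep_sub : forall A B : {set E}, A \subset B -> indep B -> indep A;
  indep_exch : forall A B : {set E}, indep A -> indep B -> (#|A| < #|B|)%N ->
     exists2 x, x \in B :\: A & indep (x |: A)
}.

Definition mrank (E : finType) (M : matroid E) (A : {set E}) : nat :=
  \max_(B : {set E} | (B \subset A) && indep M B) #|B|.

Definition matroid_rank (E : finType) (M : matroid E) : nat := mrank M setT.

(* Tutte polynomial as an element of Z[y][x]: the outer variable is x,
   coefficients are polynomials in y. *)
Definition tutte (E : finType) (M : matroid E) : {poly {poly int}} :=
  \sum_(A : {set E})
     ('X - 1) ^+ (matroid_rank M - mrank M A)%N
     * (('X - 1) ^+ (#|A| - mrank M A)%N)%:P.

Definition tutte_coef (E : finType) (M : matroid E) (i j : nat) : int :=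
  ((tutte M)`_i)`_j.

(* Main.v *)
Require Import Defs.
From HB Require Import structures.
From mathcomp Require Import all_boot all_order all_algebra.
From mathcomp Require Import zify ring.
Import Order.TTheory GRing.Theory Num.Theory.
Local Open Scope ring_scope.

Lemma coefXm1 (R : comNzRingType) a i :
  ((('X - 1) ^+ a : {poly R})`_i) = (-1) ^+ (a + i) *+ 'C(a, i).
Proof.
elim: a i => [|a IH] i.
  rewrite expr0 coef1; case: i => [|i] /=.
    by rewrite bin0 expr0.
  by rewrite bin0n mulr0n.
rewrite exprSr mulrBr mulr1 coefB coefMX.
case: i => [|i] /=.
  by rewrite IH !bin0 !addn0 exprS mulN1r sub0r mulr1n.
rewrite !IH binS mulrnDr addrC -mulNrn.
by rewrite addSn !addnS !exprS !mulN1r !opprK.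
Qed.

Definition K (c a n : nat) : int :=
  \sum_(i < n.+1) (-1) ^+ i * ('C(a, i) * 'C(c + n - i, c))%:R.

Lemma K_eq c a n : (a <= n)%N -> K c a n = ('C(c + n - a, n))%:R.
Proof.
elim: a n => [|a IH] n han.
  rewrite /K big_ord_recl /= expr0 mul1r bin0 mul1n subn0 big1.
    by rewrite addr0 -{2}(addnK n c) bin_sub ?leq_addl.
  by move=> i _; rewrite bin0n mul0n mulr0.
case: n han => [//|n] han.
have h1 : K c a n.+1 - K c a n = K c a.+1 n.+1.
  rewrite /K [in RHS]big_ord_recl [in X in X - _ = _]big_ord_recl /=.
  rewrite -addrA; congr (_ + _); first by rewrite !bin0.
  rewrite -sumrB; apply: eq_bigr => i _.
  rewrite /bump /= add1n.
  rewrite binS !natrM natrD exprS mulN1r.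
  rewrite addnS subSS; ring.
rewrite -h1 !IH //; last by lia.
have -> : (c + n.+1 - a = (c + n - a).+1)%N by lia.
rewrite binS natrD addrK; congr (_%:R); congr 'C(_, _); lia.
Qed.

Definition G (a p m : nat) : int :=
  \sum_(k < a.+1) (-1) ^+ k * ('C(a, k) * 'C(m + k, p))%:R.

Lemma G_eq a p m : (a <= p)%N -> G a p m = (-1) ^+ a * ('C(m, p - a))%:R.
Proof.
elim: a p m => [|a IH] p m hap.
  by rewrite /G big_ord_recl big_ord0 addr0 bin0 mul1n addn0 subn0.
have h1 : G a.+1 p m = G a p m - G a p m.+1.
  rewrite /G big_ord_recl [in X in X - _]big_ord_recl /=.
  rewrite [X in _ = _ + X - _](_ : _ = \sum_(i < a.+1) (-1)^+ (i.+1) * ('C(a, i.+1) * 'C(m + i.+1, p))%:R); last first.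
    by rewrite [RHS]big_ord_recr /= bin_small // mul0n mulr0 addr0.
  rewrite !bin0 -addrA; congr (_ + _).
  rewrite -sumrB; apply: eq_bigr => i _.
  rewrite /bump /= add1n binS !natrM natrD exprS mulN1r addnS addSn.
  ring.
rewrite h1 !IH; try lia.
have -> : (p - a = (p - a.+1).+1)%N by lia.
rewrite binS natrD exprS; ring.
Qed.

Lemma contrib n a c : (a <= n)%N ->
  \sum_(i < n.+1) \sum_(j < (n - i).+1)
     (-1) ^+ j * ('C(n - i, j))%:R *
       (((-1) ^+ (a + i) *+ 'C(a, i)) * ((-1) ^+ (c + j) *+ 'C(c, j)))
  = (-1) ^+ (a + c) * ('C(c + n - a, n))%:R :> int.
Proof.
move=> han.
transitivity (\sum_(i < n.+1) (-1) ^+ (a + c) * ((-1) ^+ i * ('C(a, i) * 'C(c + n - i, c))%:R) : int); last first.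
  by rewrite -mulr_sumr -/(K c a n) K_eq.
apply: eq_bigr => i _.
have hi : (i <= n)%N by rewrite -ltnS ltn_ord.
transitivity (\sum_(j < (n - i).+1) (-1) ^+ (a + c + i) * ('C(a, i) * ('C(c, j) * 'C(n - i, (n - i) - j)))%:R : int).
  apply: eq_bigr => j _.
  have hj : (j <= n - i)%N by rewrite -ltnS ltn_ord.
  rewrite bin_sub // -(mulr_natr _ 'C(a, i)) -(mulr_natr _ 'C(c, j)) !natrM !exprD.
  have hs : (-1) ^+ j * (-1) ^+ j = 1 :> int by rewrite -exprMn mulN1r opprK expr1n.
  transitivity (((-1) ^+ j * (-1) ^+ j) * ((-1) ^+ a * (-1) ^+ i * (-1) ^+ c * ('C(a, i)%:R * ('C(c, j)%:R * 'C(n - i, j)%:R))) : int).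
    ring.
  rewrite hs; ring.
rewrite -mulr_sumr -natr_sum -big_distrr /= binomial.Vandermonde.
have -> : (c + (n - i) = c + n - i)%N by lia.
have e : (n - i = c + n - i - c)%N by lia.
rewrite [in 'C(_, n - i)]e bin_sub; last by lia.
rewrite !exprD; ring.
Qed.

Lemma tcoef (E : finType) (M : matroid E) i j :
  tutte_coef M i j = \sum_(A : {set E})
    (((-1) ^+ ((matroid_rank M - mrank M A)%N + i) *+ 'C(matroid_rank M - mrank M A, i))
     * ((-1) ^+ ((#|A| - mrank M A)%N + j) *+ 'C(#|A| - mrank M A, j))).
Proof.
rewrite /tutte_coef /tutte coef_sum coef_sum; apply: eq_bigr => A _.
rewrite coefMC coefXm1.
set k := (matroid_rank M - mrank M A)%N.
rewrite (_ : (-1) ^+ (k + i) *+ 'C(k, i) = ((-1) ^+ (k + i) *+ 'C(k, i))%:P); last first.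
  by rewrite polyCMn polyC_exp polyCN polyC1.
by rewrite coefCM coefXm1.
Qed.

Lemma mrank_card (E : finType) (M : matroid E) A : (mrank M A <= #|A|)%N.
Proof. by apply/bigmax_leqP => B /andP[sub _]; exact: subset_leq_card. Qed.

Lemma mrank_le (E : finType) (M : matroid E) A : (mrank M A <= matroid_rank M)%N.
Proof.
apply/bigmax_leqP => B /andP[sub ind].
by apply: (@leq_bigmax_cond _ _ _ B); rewrite subsetT ind.
Qed.

Lemma rank_le_n (E : finType) (M : matroid E) : (matroid_rank M <= #|E|)%N.
Proof. by have := mrank_card _ M setT; rewrite cardsT. Qed.

Lemma sum_card (E : finType) (F : nat -> int) :
  \sum_(A : {set E}) F #|A| = \sum_(k < #|E|.+1) ('C(#|E|, k))%:R * F k.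
Proof.
rewrite (partition_big (fun A : {set E} => (inord #|A| : 'I_#|E|.+1)) xpredT) //=.
apply: eq_bigr => k _.
rewrite (eq_bigr (fun _ => F k)); last first.
  by move=> A /eqP <-; rewrite inordK // ltnS max_card.
rewrite sumr_const mulr_natl; congr (_ *+ _).
rewrite -card_draws; apply: eq_card => A; rewrite !inE.
apply/eqP/eqP => [<-|->]; last by rewrite inord_val.
by rewrite /= inordK // ltnS max_card.
Qed.

Theorem corollary5p2 (E : finType) (M : matroid E) :
  let n := #|E| in
  let r := matroid_rank M in
  \sum_(i < n.+1) \sum_(j < (n - i).+1)
      (-1) ^+ j * ('C(n - i, j))%:R * tutte_coef M i j
  = (-1) ^+ (n - r) :> int.
Proof.
move=> n r.
have hrn : (r <= n)%N by exact: rank_le_n.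
have en : #|E| = n by [].
have er : matroid_rank M = r by [].
clearbody n r.
under eq_bigr => i _ do under eq_bigr => j _ do rewrite tcoef mulr_sumr.
under eq_bigr => i _ do rewrite exchange_big.
rewrite exchange_big /= er.
rewrite (eq_bigr (fun A : {set E} => (-1) ^+ (r + #|A|) * ('C(n - r + #|A|, n))%:R)); last first.
  move=> A _.
  have h1 := mrank_le _ M A; have h2 := mrank_card _ M A; rewrite er in h1.
  rewrite contrib; last by lia.
  have -> : (#|A| - mrank M A + n - (r - mrank M A) = n - r + #|A|)%N by lia.
  congr (_ * _).
  have -> : (r + #|A| = (r - mrank M A + (#|A| - mrank M A)) + 2 * mrank M A)%N by lia.
  by rewrite [RHS]exprD exprM expr2 mulN1r opprK expr1n mulr1.
rewrite (sum_card E (fun k => (-1) ^+ (r + k) * ('C(n - r + k, n))%:R)) en.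
transitivity ((-1) ^+ r * G n n (n - r)).
  rewrite /G mulr_sumr; apply: eq_bigr => k _.
  rewrite exprD natrM; ring.
rewrite G_eq // subnn bin0 mulr1.
have -> : (-1) ^+ n = (-1) ^+ (n - r) * (-1) ^+ r :> int by rewrite -exprD subnK.
have hs : (-1) ^+ r * (-1) ^+ r = 1 :> int by rewrite -exprMn mulN1r opprK expr1n.
by rewrite mulrC -mulrA hs mulr1.
Qed.
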